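(* Let $n\ge1$ and let $a$ be an inversion sequence of length $n$. Then $a$ avoids each of the patterns $102$, $201$, $210$ if and only if $a$ can be written either as $a=p_1\circ p_2$ or as $a=p_1\circ r_2$, where: (i) $p_1$ is a (possibly empty) non-decreasing sequence with $\max(p_1)<\max(a)$ (if nonempty); (ii) $p_2$ is a nonempty sequence with all entries in $\{\max(a),\operatorname{premax}(a)\}$ whose first entry is $\max(a)$; (iii) $r_2=(\max(a),\dots,\max(a),k,\dots,k)$ consists of one or more copies of $\max(a)$ followed by one or more copies of a single value $k$ with $0\le k<\operatorname{premax}(a)$. (When $a$ has only one distinct value, $\operatorname{premax}(a)$ is undefined, and the decomposition is $p_1$ empty and $p_2=a$.)
   Context: An inversion sequence of length $n$ is an integer sequence $(a_1,\dots,a_n)$ with $0\le a_i<i$ for all $i$. A pattern is a sequence $\sigma$ of non-negative integers containing every value from $0$ to $\max(\sigma)$; the reduction of a sequence replaces its smallest values by $0$, the next smallest by $1$, etc. A sequence $a$ contains $\sigma$ if some (not necessarily consecutive) subsequence of $a$ has reduction $\sigma$; otherwise $a$ avoids $\sigma$. For a sequence $a$, $\max(a)$ is its largest value and $\operatorname{premax}(a)$ is the largest value of $a$ strictly less than $\max(a)$. $\circ$ denotes concatenation. *)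

(* Defs.v *)
From mathcomp Require Import all_boot.
Set Implicit Arguments. Unset Strict Implicit. Unset Printing Implicit Defensive.

(* Inversion sequence of length n: (a_1,...,a_n) with 0 <= a_i < i (1-indexed);
   with 0-indexed nth: a`_i < i+1. *)
Definition inv_seq (n : nat) (a : seq nat) : Prop :=
  size a = n /\ forall i, i < n -> nth 0 a i < i.+1.

Definition reduction (s : seq nat) : seq nat :=
  [seq size (undup [seq y <- s | y < x]) | x <- s].

Definition contains (a sigma : seq nat) : Prop :=
  exists s, subseq s a /\ reduction s = sigma.

Definition avoids (a sigma : seq nat) : Prop := ~ contains a sigma.

Definition smax (s : seq nat) : nat := \max_(x <- s) x.

(* largest value strictly less than smax s (defaults to 0 if none exists) *)
Definition premax (s : seq nat) : nat := \max_(x <- s | x < smax s) x.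

Definition cond_p1 (a p1 : seq nat) : Prop :=
  sorted leq p1 /\ (p1 != [::] -> smax p1 < smax a).

Definition cond_p2 (a p2 : seq nat) : Prop :=
  p2 != [::] /\ all (fun x => (x == smax a) || (x == premax a)) p2 /\
  head 0 p2 = smax a.

Definition cond_r2 (a r2 : seq nat) : Prop :=
  exists i j k, 0 < i /\ 0 < j /\ k < premax a /\
    r2 = nseq i (smax a) ++ nseq j k.

(* Main.v *)
Require Import Defs.
From mathcomp Require Import all_boot zify.
Set Implicit Arguments. Unset Strict Implicit.

Definition bad (x y z : nat) := (y < x) && (z != x) && (z != y).

Ltac rw_lt h := rewrite ?h ?(ltnW h) ?(ltn_geF h) ?(leq_gtF (ltnW h)) ?(ltn_eqF h) ?(gtn_eqF h).

Lemma red_bad x y z :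
  reduction [:: x; y; z] \in [:: [:: 1;0;2]; [:: 2;0;1]; [:: 2;1;0]] = bad x y z.
Proof.
rewrite /reduction /bad.
case: (ltngtP x y) => h1; case: (ltngtP y z) => h2; case: (ltngtP x z) => h3;
  subst; rw_lt h1; rw_lt h2; rw_lt h3; rewrite /= ?ltnn ?leqnn ?eqxx /=;
  do 3 (rewrite ?inE; rw_lt h1; rw_lt h2; rw_lt h3; rewrite ?inE ?ltnn ?leqnn ?eqxx //=).
all: lia.
Qed.
Lemma subseq_catP (s p q : seq nat) : subseq s (p ++ q) ->
  exists s1 s2, s = s1 ++ s2 /\ subseq s1 p /\ subseq s2 q.
Proof.
elim: p s => [|u p IH] s /=; first by move=> h; exists [::], s.
case: s => [|x s]; first by move=> _; exists [::], [::]; rewrite !sub0seq.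
case: eqP => [->|ne] h.
  have [s1 [s2 [-> [h1 h2]]]] := IH _ h.
  by exists (u :: s1), s2; rewrite /= eqxx.
have [s1 [s2 [e [h1 h2]]]] := IH _ h.
exists s1, s2; split=> //; split=> //.
exact: subseq_trans h1 (subseq_cons _ _).
Qed.

Lemma smax_cons x s : smax (x :: s) = maxn x (smax s).
Proof. by rewrite /smax big_cons. Qed.

Lemma smax_mem s : s != [::] -> smax s \in s.
Proof.
elim: s => // u s IH _; rewrite smax_cons inE.
case: s IH => [|v s] IH; first by rewrite /smax big_nil maxn0 eqxx.
have := IH isT; rewrite /maxn; case: ifP => _ h; first by rewrite h orbT.
by rewrite eqxx.
Qed.

Lemma smax_ge x s : x \in s -> x <= smax s.
Proof. move=> h; exact: (@leq_bigmax_seq _ s xpredT id x). Qed.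

Lemma premax_ge x a : x \in a -> x < smax a -> x <= premax a.
Proof. move=> h1 h2; exact: (@leq_bigmax_seq _ a (fun y => y < smax a) id x). Qed.

Lemma premax_cases a : (premax a \in a /\ premax a < smax a) \/ premax a = 0.
Proof.
have e : premax a = smax [seq x <- a | x < smax a] by rewrite /premax /smax big_filter.
case: (eqVneq [seq x <- a | x < smax a] [::]) => h.
  by right; rewrite e h /smax big_nil.
left; have := smax_mem h; rewrite -e mem_filter => /andP[-> ->]; done.
Qed.

Lemma two_order (x y : nat) s : x \in s -> y \in s -> x != y ->
  subseq [:: x; y] s \/ subseq [:: y; x] s.
Proof.
elim: s => // u s IH; rewrite !inE.
case: (eqVneq x u) => [->|xu]; case: (eqVneq y u) => [->|yu].
- by [].
- move=> _ /= ys _; left; by rewrite eqxx sub1seq.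
- move=> /= xs _ _; right; by rewrite eqxx sub1seq.
- rewrite /= => xs ys ne.
  by case: (IH xs ys ne) => h; [left|right]; apply: subseq_trans h (subseq_cons _ _).
Qed.

Lemma sorted_of (p : seq nat) : (forall x y, subseq [:: x; y] p -> x <= y) -> sorted leq p.
Proof.
elim: p => // u p IH H.
rewrite /= path_sortedE; last exact: leq_trans.
apply/andP; split.
  apply/allP => y yp; apply: H; by rewrite /= eqxx sub1seq.
apply: IH => x y h; apply: H; exact: subseq_trans h (subseq_cons _ _).
Qed.

Lemma sorted_sub (p : seq nat) x y : sorted leq p -> subseq [:: x; y] p -> x <= y.
Proof. move=> sp sub; have := subseq_sorted leq_trans sub sp; by rewrite /= andbT. Qed.

Lemma shape (M k : nat) s : (forall w, w \in s -> w = M \/ w = k) ->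
  ~ subseq [:: k; M] s -> M != k -> exists i j, s = nseq i M ++ nseq j k.
Proof.
elim: s => [|u s IH] H ns Mk; first by exists 0, 0.
case: (H u (mem_head _ _)) => eu; subst u.
  have [i [j ->]] : exists i j, s = nseq i M ++ nseq j k.
    apply: IH => //.
      by move=> w ws; apply: H; rewrite inE ws orbT.
    by move=> h; apply: ns; apply: subseq_trans h (subseq_cons _ _).
  by exists i.+1, j.
have Ms : M \notin s.
  by apply/negP => Ms; apply: ns; rewrite /= eqxx sub1seq.
have : all (pred1 k) s.
  apply/allP => w ws /=; case: (H w); first by rewrite inE ws orbT.
    by move=> e; move: Ms; rewrite -e ws.
  by move->.
move/all_pred1P => e; exists 0, (size s).+1; by rewrite /= -e.
Qed.

Lemma avoid_iff a :
  (avoids a [:: 1; 0; 2] /\ avoids a [:: 2; 0; 1] /\ avoids a [:: 2; 1; 0]) <->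
  (forall x y z, subseq [:: x; y; z] a -> ~~ bad x y z).
Proof.
split.
  move=> [h1 [h2 h3]] x y z sub; apply/negP => b.
  move: (red_bad x y z); rewrite b !inE => /orP[/eqP e|/orP[/eqP e|/eqP e]].
  - by apply: h1; exists [:: x; y; z].
  - by apply: h2; exists [:: x; y; z].
  - by apply: h3; exists [:: x; y; z].
move=> H.
have G : forall sg, sg \in [:: [:: 1;0;2]; [:: 2;0;1]; [:: 2;1;0]] -> avoids a sg.
  move=> sg sgin [s [sub e]].
  have : size s = 3 by rewrite -(size_map (fun x => size (undup [seq y <- s | y < x])) s) -/(reduction s) e; move: sgin; rewrite !inE => /orP[/eqP->|/orP[/eqP->|/eqP->]].
  case: s sub e => [|x [|y [|z [|? ?]]]] // sub e _.
  have := H _ _ _ sub; rewrite -red_bad e sgin; done.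
by split; [|split]; apply: G; rewrite !inE eqxx ?orbT.
Qed.

Theorem mainTheorem2 (n : nat) (a : seq nat) :
  1 <= n -> inv_seq n a ->
  (avoids a [:: 1; 0; 2] /\ avoids a [:: 2; 0; 1] /\ avoids a [:: 2; 1; 0]) <->
  exists p1 q, a = p1 ++ q /\ cond_p1 a p1 /\ (cond_p2 a q \/ cond_r2 a q).
Proof.
move=> n1 [sz _]; rewrite avoid_iff.
have an : a != [::] by apply/eqP => e; move: sz n1; rewrite e /= => <-.
set M := smax a.
have Ma : M \in a by exact: smax_mem.
have geM : forall w, w \in a -> w <= M by move=> w; apply: smax_ge.
split.
- move=> H.
  set i := index M a; set p1 := take i a; set q := drop i a.
  have ea : a = p1 ++ q by rewrite cat_take_drop.
  have eq' : q = M :: drop i.+1 a.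
    by rewrite /q (drop_nth 0) ?index_mem // nth_index.
  set q' := drop i.+1 a in eq'.
  have Mq : M \in q by rewrite eq' mem_head.
  have p1lt : forall w, w \in p1 -> w < M.
    move=> w wp; have wa : w \in a by apply: mem_take wp.
    rewrite ltn_neqAle geM // andbT; apply/eqP => ew.
    by move: wp; rewrite /p1 in_take // ew ltnn.
  have key : forall w1 w2, w1 \in q -> w2 \in q -> w1 != M -> w2 != M -> w1 = w2.
    move=> w1 w2 w1q w2q n1M n2M; apply/eqP/negPn/negP => ne.
    have w1q' : w1 \in q' by move: w1q; rewrite eq' inE (negbTE n1M).
    have w2q' : w2 \in q' by move: w2q; rewrite eq' inE (negbTE n2M).
    have w1a : w1 \in a by rewrite ea mem_cat w1q orbT.
    have w2a : w2 \in a by rewrite ea mem_cat w2q orbT.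
    have [u [v [uv [huv [uM [vM vu]]]]]] : exists u v, subseq [:: u; v] q' /\
        u \in a /\ u != M /\ v != M /\ v != u.
      case: (two_order w1q' w2q' ne) => h.
        by exists w1, w2; do !split=> //; rewrite eq_sym.
      by exists w2, w1; do !split=> //.
    have sub : subseq [:: M; u; v] a.
      apply: (@subseq_trans _ q); last by rewrite [X in subseq _ X]ea suffix_subseq.
      by rewrite eq' /= eqxx.
    move: (H _ _ _ sub); rewrite /bad ltn_neqAle uM geM //= vM vu.
    done.
  exists p1, q; split=> //; split.
    split.
      apply: sorted_of => x y sub; rewrite leqNgt; apply/negP => yx.
      have xp : x \in p1 by apply: (mem_subseq sub); rewrite mem_head.
      have yp : y \in p1 by apply: (mem_subseq sub); rewrite !inE eqxx orbT.
      have sub' : subseq [:: x; y; M] a.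
        rewrite [X in subseq _ X]ea -[[:: x; y; M]]/([:: x; y] ++ [:: M]).
        by apply: cat_subseq => //; rewrite sub1seq.
      move: (H _ _ _ sub'); rewrite /bad yx.
      by rewrite (gtn_eqF (p1lt _ xp)) (gtn_eqF (p1lt _ yp)).
    by move=> ne; apply: p1lt; apply: smax_mem.
  case: (boolP (all (fun x => (x == M) || (x == premax a)) q)) => hall.
    by left; split; [rewrite eq'|split=> //; rewrite eq'].
  right; move/allPn: hall => [k kq]; rewrite negb_or => /andP[kM kP].
  have ka : k \in a by rewrite ea mem_cat kq orbT.
  have klt : k < premax a.
    rewrite ltn_neqAle kP premax_ge //.
    by rewrite ltn_neqAle kM geM.
  have [[Pa PM]|P0] := premax_cases a; last by rewrite P0 in klt.
  have Pq : premax a \notin q.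
    apply/negP => Pq; have := key _ _ Pq kq; rewrite (ltn_eqF PM).
    by move=> /(_ isT kM) e; rewrite e ltnn in klt.
  have Pp : premax a \in p1 by move: Pa; rewrite [X in _ \in X]ea mem_cat (negbTE Pq) orbF.
  have noKM : ~ subseq [:: k; M] q.
    move=> sub.
    have sub' : subseq [:: premax a; k; M] a.
      rewrite [X in subseq _ X]ea -[[:: premax a; k; M]]/([:: premax a] ++ [:: k; M]).
      by apply: cat_subseq => //; rewrite sub1seq.
    move: (H _ _ _ sub'); rewrite /bad klt (gtn_eqF PM) /=.
    by rewrite (gtn_eqF (leq_trans klt (ltnW PM))).
  have kM' : M != k by rewrite eq_sym.
  have qv : forall w, w \in q -> w = M \/ w = k.
    move=> w wq; case: (eqVneq w M) => [->|wM]; first by left.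
    by right; apply: key.
  have [i0 [j0 eqq]] := shape qv noKM kM'.
  exists i0, j0, k; split; last split=> //.
    case: i0 eqq => [|i0] // eqq.
    by move: Mq; rewrite eqq /= mem_nseq (negbTE kM') andbF.
  case: j0 eqq => [|j0] // eqq.
  by move: kq; rewrite eqq cats0 mem_nseq (negbTE kM) andbF.
- move=> [p1 [q [ea [[sp1 p1M] Hq]]]] x y z sub.
  apply/negP => /andP[/andP[yx zx] zy].
  have p1lt : forall w, w \in p1 -> w < M.
    move=> w wp; apply: leq_ltn_trans (p1M _); first exact: smax_ge.
    by apply/eqP => e; rewrite e in wp.
  have p1le : forall w, w \in p1 -> w <= premax a.
    move=> w wp; apply: premax_ge (p1lt _ wp).
    by rewrite [X in _ \in X]ea mem_cat wp.
  have [c [qv Mc]] : exists c, (forall w, w \in q -> w = M \/ w = c) /\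
      (cond_p2 a q \/ (c < premax a /\ ~ subseq [:: c; M] q)).
    case: Hq => [[qn [qa qh]]|[i [j [k [i0 [j0 [kP eqq]]]]]]].
      exists (premax a); split; last by left.
      move=> w wq; move/allP: qa => /(_ w wq) /orP[/eqP|/eqP]; by [left|right].
    have kM : k != M.
      have [[_ PM]|P0] := premax_cases a; last by rewrite P0 in kP.
      by rewrite (ltn_eqF (ltn_trans kP PM)).
    exists k; split.
      move=> w; rewrite eqq mem_cat !mem_nseq => /orP[/andP[_ /eqP]|/andP[_ /eqP]];
        by [left|right].
    right; split=> // sub'.
    move: sub'; rewrite eqq => /subseq_catP [t1 [t2 [et [h1 h2]]]].
    case: t1 et h1 => [|u1 [|u2 [|u3 ?]]] //= et h1.
    + have : M \in nseq j k by apply: (mem_subseq h2); rewrite -et !inE eqxx orbT.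
      by rewrite mem_nseq eq_sym (negbTE kM) andbF.
    + case: et => eu _; subst u1.
      by move: h1; rewrite sub1seq mem_nseq (negbTE kM) andbF.
    + case: et => eu _ _; subst u1.
      by have := mem_subseq h1 (mem_head _ _); rewrite mem_nseq (negbTE kM) andbF.
  move: sub; rewrite [X in subseq _ X]ea => /subseq_catP [s1 [s2 [es [h1 h2]]]].
  have qin : forall w, w \in s2 -> w = M \/ w = c by move=> w /(mem_subseq h2); apply: qv.
  have sxy : forall s, subseq [:: x; y] s -> sorted leq s -> False.
    move=> s ss so; have := sorted_sub so ss; by rewrite leqNgt yx.
  case: s1 es h1 => [|u1 [|u2 [|u3 [|? ?]]]] //= es h1.
  + subst s2.
    have := qin x; have := qin y; have := qin z; rewrite !inE !eqxx !orbT.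
    move=> /(_ isT) hz /(_ isT) hy /(_ isT) hx.
    move: yx zx zy; case: hx => ->; case: hy => ->; case: hz => ->;
      move=> h3 /eqP h4 /eqP h5; lia.
  + case: es => eu e2; subst u1 s2.
    have xp : x \in p1 by rewrite -sub1seq.
    case: Mc => [[qn [qa qh]]|[cP nsub]].
      have h := p1lt _ xp; have h' := p1le _ xp.
      move: qa => /allP /(_ y (mem_subseq h2 (mem_head _ _))) /orP[/eqP ey'|/eqP ey'];
        move: ey' h h' yx; rewrite /M => ->; lia.
    case: (qin y (mem_head _ _)) => ey.
      by have := p1lt _ xp; rewrite -ey ltnNge ltnW.
    case: (qin z); first by rewrite !inE eqxx orbT.
      by move=> ez; apply: nsub; rewrite -ey -ez.
    by move=> ez; rewrite ez ey eqxx in zy.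
  + case: es => e1 e2 e3; subst u1 u2 s2.
    exact: sxy h1 sp1.
  + case: es => e1 e2 e3 e4; subst u1 u2 u3.
    apply: sxy sp1; apply: subseq_trans h1; exact: (prefix_subseq [:: x; y] [:: z]).
Qed.
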